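(* Let $p>3$ be a prime, $e\in\{3,4,6\}$ with $e\mid p+1$, $k\ge1$, $\alpha\in\mathbb{P}^1(\mathbb{Q}_p)$ with $v(\alpha^{-1})\ge0$, and let $g_k(x)=x^{p^{2k}}+\sum_{n=1}^k(-1)^np^n(x^{p^{2k-2n}}+\alpha^{-1}\pi_e^2x^{p^{2k+1-2n}})$. Let $n\in\{0,\dots,k\}$, $a\in\mathbb{C}_p$, and let $\gamma$ be a root of $g_k$ maximising $v(a-\gamma)$ among the roots of $g_k$. If $v(g_k(a))>k-n+\frac{1}{p^2-1}$, then $v(a-\gamma)>\frac{1}{p^{2n}(p^2-1)}$. If moreover $v(g_k(a))\le k-n+1+\frac{1}{p^2-1}$, then $v(a-\gamma)=\frac{1}{p^{2n}}\big(v(g_k(a))-k+n\big)$.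
   Context: $v$ is the $p$-adic valuation on $\mathbb{C}_p$ with $v(p)=1$; $\pi_e\in\overline{\mathbb{Q}}_p$ is a fixed root of $x^e+p$; convention $\alpha^{-1}=0$ if $\alpha=\infty$. *)

(* Defs.v *)
From HB Require Import structures.
From mathcomp Require Import all_boot all_order all_algebra.
From mathcomp Require Import reals constructive_ereal ereal.
Set Implicit Arguments. Unset Strict Implicit. Unset Printing Implicit Defensive.
Import Order.TTheory GRing.Theory Num.Theory.
Local Open Scope ring_scope.

(* Axiomatic stand-in for (C_p, v): an algebraically closed field K of
   characteristic 0 with a (rank one, real-valued) valuation
   v : K -> \bar R, v 0 = +oo, normalised by v p = 1, complete for v. *)
Definition is_Cp_valuation (R : realType) (K : closedFieldType) (p : nat)
    (v : K -> \bar R) : Prop :=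
  (  ([pchar K] =i pred0) /\
      (forall x : K, v x = +oo%E <-> x = 0%R) /\
      (forall x : K, v x != -oo%E) /\
      (forall x y : K, v (x * y)%R = (v x + v y)%E) /\
      (forall x y : K, (Order.min (v x) (v y) <= v (x + y)%R)%E) /\
      v (p%:R) = 1%:E /\
      (forall u : nat -> K,
        (forall M : R, exists N : nat, forall i j : nat, (N <= i)%N -> (N <= j)%N ->
            (M%:E < v (u i - u j)%R)%E) ->
        exists l : K, forall M : R, exists N : nat, forall i : nat, (N <= i)%N ->
            (M%:E < v (u i - l)%R)%E)).

(* x lies in Q_p, i.e. in the v-adic closure of Q inside K. *)
Definition in_Qp (R : realType) (K : closedFieldType) (v : K -> \bar R) (x : K) : Prop :=
  forall M : R, exists q : rat, (M%:E < v (x - ratr q)%R)%E.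

(* g_k(x) = x^{p^{2k}} + sum_{n=1}^k (-1)^n p^n (x^{p^{2k-2n}} + beta pi^2 x^{p^{2k+1-2n}}),
   where beta = alpha^{-1}. *)
Definition gk (K : closedFieldType) (p k : nat) (beta pi : K) : {poly K} :=
  'X^(p ^ (2 * k)) +
  \sum_(1 <= n < k.+1)
     ((-1) ^+ n * (p ^ n)%:R) *:
       ('X^(p ^ (2 * k - 2 * n)) + (beta * pi ^+ 2) *: 'X^(p ^ (2 * k + 1 - 2 * n))).

(* Main.v *)
Require Import Defs.
From HB Require Import structures.
From mathcomp Require Import all_boot all_order all_algebra.
From mathcomp Require Import reals constructive_ereal ereal.
From mathcomp Require Import ring lra zify.
Import Order.TTheory GRing.Theory Num.Theory.
Local Open Scope ring_scope.

Section Val.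
Variables (R : realType) (K : closedFieldType) (v : K -> \bar R) (p : nat).
Hypothesis hv : is_Cp_valuation p v.
Hypothesis hp : prime p.

Lemma v_inf x : v x = +oo%E <-> x = 0.
Proof. by case: hv => _ [h _]. Qed.
Lemma v_ninf x : v x != -oo%E.
Proof. by case: hv => _ [_ [h _]]. Qed.
Lemma vM x y : v (x * y) = (v x + v y)%E.
Proof. by case: hv => _ [_ [_ [h _]]]. Qed.
Lemma v_ultra x y : (Order.min (v x) (v y) <= v (x + y))%E.
Proof. by case: hv => _ [_ [_ [_ [h _]]]]. Qed.
Lemma vp : v p%:R = 1%:E.
Proof. by case: hv => _ [_ [_ [_ [_ [h _]]]]]. Qed.

Lemma v0 : v 0 = +oo%E.
Proof. by apply/v_inf. Qed.

Lemma vfin x : x != 0 -> v x = (fine (v x))%:E.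
Proof.
move=> hx; rewrite fineK // fin_numE v_ninf /=.
by apply/eqP => /v_inf /eqP; rewrite (negPf hx).
Qed.

Lemma vreal x : x != 0 -> exists r : R, v x = r%:E.
Proof. by move=> /vfin ->; eexists. Qed.

Lemma v1 : v 1 = 0%E.
Proof.
have [r hr] := @vreal 1 (oner_neq0 K).
have := vM 1 1; rewrite mulr1 hr -EFinD => /eqP; rewrite eqe => /eqP h.
by congr (_%:E); lra.
Qed.

Lemma vN1 : v (-1) = 0%E.
Proof.
have [r hr] : exists r : R, v (-1) = r%:E by apply: vreal; rewrite oppr_eq0 oner_neq0.
have := vM (-1) (-1); rewrite mulrNN mulr1 v1 hr -EFinD => /eqP; rewrite eqe => /eqP h.
by congr (_%:E); lra.
Qed.

Lemma vN x : v (- x) = v x.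
Proof. by rewrite -mulN1r vM vN1 add0e. Qed.

Lemma vB x y : v (x - y) = v (y - x).
Proof. by rewrite -vN opprB. Qed.

Lemma le_vD (z : \bar R) x y : (z <= v x)%E -> (z <= v y)%E -> (z <= v (x + y))%E.
Proof.
move=> h1 h2; apply: le_trans (v_ultra x y).
by rewrite le_min h1 h2.
Qed.

Lemma lt_vD (z : \bar R) x y : (z < v x)%E -> (z < v y)%E -> (z < v (x + y))%E.
Proof.
move=> h1 h2; apply: lt_le_trans (v_ultra x y).
by rewrite lt_min h1 h2.
Qed.

Lemma le_vsum (I : Type) (s : seq I) (P : pred I) (F : I -> K) (z : \bar R) :
  (forall i, P i -> (z <= v (F i))%E) -> (z <= v (\sum_(i <- s | P i) F i))%E.
Proof.
move=> h; apply: (big_ind (fun x => z <= v x)%E) => //.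
- by rewrite v0 leey.
- by move=> x y; apply: le_vD.
Qed.

Lemma lt_vsum (I : Type) (s : seq I) (P : pred I) (F : I -> K) (z : R) :
  (forall i, P i -> (z%:E < v (F i))%E) -> (z%:E < v (\sum_(i <- s | P i) F i))%E.
Proof.
move=> h; apply: (big_ind (fun x => z%:E < v x)%E) => //.
- by rewrite v0 ltry.
- by move=> x y; apply: lt_vD.
Qed.

Lemma veq_add x y (r : R) : v x = r%:E -> (r%:E < v y)%E -> v (x + y) = r%:E.
Proof.
move=> hx hy; apply/eqP; rewrite eq_le; apply/andP; split; last first.
  by rewrite -hx; apply: le_vD => //; rewrite hx ltW.
rewrite leNgt; apply/negP => h.
have : (r%:E < v (x + y + - y))%E by apply: lt_vD => //; rewrite vN.
by rewrite addrK hx ltxx.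
Qed.

Lemma veq_sum (I : eqType) (s : seq I) (F : I -> K) (i0 : I) (r : R) :
  uniq s -> i0 \in s -> v (F i0) = r%:E ->
  (forall i, i \in s -> i != i0 -> (r%:E < v (F i))%E) ->
  v (\sum_(i <- s) F i) = r%:E.
Proof.
move=> us hi0 h0 h; rewrite (bigD1_seq i0) //=.
apply: veq_add => //.
rewrite big_seq_cond; apply: lt_vsum => i /andP [his hne]; exact: h.
Qed.

Lemma le_vM (r s : R) x y : (r%:E <= v x)%E -> (s%:E <= v y)%E -> ((r + s)%:E <= v (x * y))%E.
Proof. by move=> h1 h2; rewrite vM EFinD; apply: leeD. Qed.

Lemma lt_vM (r s : R) x y : (r%:E < v x)%E -> (s%:E <= v y)%E -> ((r + s)%:E < v (x * y))%E.
Proof.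
move=> h1 h2; rewrite vM EFinD.
case: (eqVneq y 0) => [->|hy]; first by rewrite v0 addey ?ltry // v_ninf.
by apply: lte_leD => //; rewrite fin_numE eqxx.
Qed.

Lemma le_vM0 (s : R) x y : (0 <= v x)%E -> (s%:E <= v y)%E -> (s%:E <= v (x * y))%E.
Proof. by move=> h1 h2; rewrite -[s]add0r; apply: le_vM. Qed.

Lemma veqM x y (r s : R) : v x = r%:E -> v y = s%:E -> v (x * y) = (r + s)%:E.
Proof. by move=> h1 h2; rewrite vM h1 h2. Qed.

Lemma veqX x (r : R) n : v x = r%:E -> v (x ^+ n) = (n%:R * r)%:E.
Proof.
move=> h; elim: n => [|n ih]; first by rewrite expr0 v1 mul0r.
by rewrite exprS (veqM _ _ _ _ h ih) mulrSr mulrDl mul1r addrC.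
Qed.

Lemma le_vX x (r : R) n : (r%:E <= v x)%E -> ((n%:R * r)%:E <= v (x ^+ n))%E.
Proof.
move=> h; elim: n => [|n ih]; first by rewrite expr0 v1 mul0r.
by rewrite exprS mulrSr mulrDl mul1r addrC; apply: le_vM.
Qed.

Lemma le_vX0 x n : (0 <= v x)%E -> (0 <= v (x ^+ n))%E.
Proof. by move=> h; have := @le_vX x 0 n h; rewrite mulr0. Qed.

Lemma vnat_ge0 n : (0 <= v n%:R)%E.
Proof.
elim: n => [|n ih]; first by rewrite v0 leey.
by rewrite -addn1 natrD; apply: le_vD => //; rewrite v1.
Qed.

Lemma vcop n : coprime p n -> v n%:R = 0%E.
Proof.
move=> hc; have p0 : (0 < p)%N by exact: prime_gt0.
have [a _ hd] := Bezoutr n p0.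
move: hd; rewrite gcdnC (eqP hc) => /dvdnP [w hw].
apply/eqP; rewrite eq_le vnat_ge0 andbT leNgt; apply/negP => hn.
have h2 : (0%:E < v (n%:R * a%:R))%E.
  by rewrite -[0%R]addr0; apply: lt_vM => //; apply: vnat_ge0.
have h1 : v (1 + n%:R * a%:R) = 0%:E by apply: veq_add => //; rewrite v1.
move: h1; rewrite -natrM addrC natr1 mulnC -addn1 addnC hw natrM vM vp => h1.
have : (0%:E < v w%:R + 1%:E)%E.
  rewrite -[0%R]addr0 EFinD; apply: lee_ltD => //; exact: vnat_ge0.
by rewrite h1 ltxx.
Qed.

Lemma vnat n : (0 < n)%N -> v n%:R = (logn p n)%:R%:E.
Proof.
move=> n0; have [m hm hn] := pfactor_coprime hp n0.
rewrite [in LHS]hn natrM natrX vM vcop // add0e (veqX _ _ _ vp) mulr1 //.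
Qed.

Lemma vnat_real n : (0 < n)%N -> exists r : R, v n%:R = r%:E.
Proof. by move=> /vnat ->; eexists. Qed.

Lemma vpn n : v (p ^ n)%:R = n%:R%:E.
Proof. by rewrite natrX (veqX _ _ _ vp) mulr1. Qed.

Lemma vsign n : v ((-1) ^+ n) = 0%E.
Proof. by rewrite (veqX _ _ _ vN1) mulr0. Qed.

Lemma exists_val N : (0 < N)%N -> exists w : K, v w = (N%:R^-1 : R)%:E.
Proof.
move=> N0.
have : size ('X^N - (p%:R : K)%:P) != 1%N.
  by rewrite size_XnsubC // eqSS -lt0n.
move=> /closed_rootP [w]; rewrite /root hornerD hornerN hornerXn hornerC subr_eq0 => /eqP hw.
have : v (w ^+ N) = 1%:E by rewrite hw vp.
have [w0|wn0] := eqVneq w 0.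
  by rewrite w0 expr0n -(prednK N0) /= v0.
have [r hr] := @vreal w wn0.
rewrite (veqX _ _ _ hr) => /eqP; rewrite eqe => /eqP h.
exists w; rewrite hr; congr (_%:E).
have hN : (N%:R : R) != 0 by rewrite pnatr_eq0 -lt0n.
by apply: (mulfI hN); rewrite h mulfV.
Qed.

Variables (k : nat) (beta pi : K) (e : nat).
Hypothesis hpi : pi ^+ e = - (p%:R).
Hypothesis he0 : (0 < e)%N.
Hypothesis hbeta : (0 <= v beta)%E.

Definition cc n : K := (-1) ^+ n * (p ^ n)%:R.
Definition bb : K := beta * pi ^+ 2.

Lemma v_cc n : v (cc n) = n%:R%:E.
Proof. by rewrite /cc vM vsign vpn add0e. Qed.

Lemma v_bb : (0 < v bb)%E.
Proof.
have pi0 : pi != 0.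
  apply/eqP => h; move: hpi; rewrite h expr0n -(prednK he0) /= => /eqP.
  by rewrite eq_sym oppr_eq0 => /eqP h2; move: vp; rewrite h2 v0.
have [r hr] := @vreal pi pi0.
have hre : (e%:R * r = 1 :> R).
  have := congr1 v hpi; rewrite vN vp (veqX _ _ _ hr) => -[].
  done.
have r0 : 0 < r.
  have : (0 < e%:R * r :> R) by rewrite hre.
  by rewrite pmulr_rgt0 // ltr0n.
rewrite /bb vM (veqX _ _ _ hr).
case: (v beta) hbeta => [rb| |] //= hb.
rewrite lee_fin in hb; rewrite -EFinD lte_fin; nra.
Qed.

Lemma gk_horner x : (gk p k beta pi).[x] =
  \sum_(0 <= n < k.+1) cc n * x ^+ (p ^ (2 * k - 2 * n)) +
  \sum_(1 <= n < k.+1) (cc n * bb) * x ^+ (p ^ (2 * k + 1 - 2 * n)).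
Proof.
rewrite /gk hornerD hornerXn horner_sum [X in _ = X + _]big_ltn // /cc expr0 mul1r muln0 subn0 expn0 mul1r -addrA.
congr (_ + _); rewrite -big_split /=; apply: eq_bigr => n _.
by rewrite hornerZ hornerD hornerZ !hornerXn mulrDr mulrA.
Qed.


Definition T (g y : K) (a i : nat) : K :=
  g ^+ (p ^ a - i.+1) * y ^+ i.+1 *+ 'C(p ^ a, i.+1).

Lemma D_expand g y a :
  (g + y) ^+ (p ^ a) - g ^+ (p ^ a) = \sum_(i < p ^ a) T g y a i.
Proof.
rewrite exprDn big_ord_recl /= subn0 expr0 mulr1 bin0 mulr1n addrC addKr.
by apply: eq_bigr => i _; rewrite /bump add1n.
Qed.

Lemma taylor g y : (gk p k beta pi).[g] = 0 ->
  (gk p k beta pi).[g + y] =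
  \sum_(0 <= n < k.+1) cc n * \sum_(i < p ^ (2 * k - 2 * n)) T g y (2 * k - 2 * n) i +
  \sum_(1 <= n < k.+1) (cc n * bb) *
       \sum_(i < p ^ (2 * k + 1 - 2 * n)) T g y (2 * k + 1 - 2 * n) i.
Proof.
move=> h.
have -> : (gk p k beta pi).[g + y] = (gk p k beta pi).[g + y] - (gk p k beta pi).[g] by rewrite h subr0.
rewrite !gk_horner.
rewrite opprD addrACA -!sumrB; congr (_ + _); apply: eq_bigr => n _;
  by rewrite -mulrBr D_expand.
Qed.

Lemma pgt1 : (1 < p)%N.
Proof. exact: prime_gt1. Qed.

Lemma Tfacts a i : (i < p ^ a)%N ->
  [/\ (p ^ logn p i.+1 <= i.+1)%N, (logn p i.+1 <= a)%N &
      (a <= logn p 'C(p ^ a, i.+1) + logn p i.+1)%N].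
Proof.
move=> hi.
have h1 : (p ^ logn p i.+1 <= i.+1)%N by apply: dvdn_leq => //; exact: pfactor_dvdnn.
have h2 : (logn p i.+1 <= a)%N.
  by rewrite -(leq_exp2l _ _ pgt1); apply: leq_trans h1 _.
split => //.
have := mul_bin_diag (p ^ a) i.
move=> /(congr1 (logn p)).
have hp0 : (0 < p ^ a)%N by rewrite expn_gt0 prime_gt0.
rewrite lognM // ?bin_gt0 ?lognM ?bin_gt0 // ?pfactorK //; last by rewrite -ltnS prednK.
move=> h; rewrite addnC -h; exact: leq_addr.
Qed.


Lemma natle (A B : nat) : (A <= B)%N -> (A%:R : R) <= (B%:R : R).
Proof. by move=> h; exact: (etrans (ler_nat R A B) h). Qed.

Lemma natlt (A B : nat) : (A < B)%N -> (A%:R : R) < (B%:R : R).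
Proof. by move=> h; exact: (etrans (ltr_nat R A B) h). Qed.

Lemma root_ge0 g : (gk p k beta pi).[g] = 0 -> (0 <= v g)%E.
Proof.
move=> hr; rewrite leNgt; apply/negP => hneg.
have g0 : g != 0 by apply/eqP => h; move: hneg; rewrite h v0.
have [r hr0] := @vreal g g0.
have rn : r < 0 by move: hneg; rewrite hr0 lte_fin.
move: hr; rewrite gk_horner big_ltn // /cc expr0 mul1r muln0 subn0 expn0 mul1r -addrA.
set N := (p ^ (2 * k))%N.
have hN : v (g ^+ N) = (N%:R * r)%:E by rewrite (veqX _ _ _ hr0).
move=> h; have : v (g ^+ N + (\sum_(1 <= i < k.+1) (-1) ^+ i * (p ^ i)%:R * g ^+ (p ^ (2 * k - 2 * i)) +
   \sum_(1 <= n < k.+1) cc n * bb * g ^+ (p ^ (2 * k + 1 - 2 * n)))) = (N%:R * r)%:E.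
  apply: veq_add => //; apply: lt_vD.
    rewrite big_seq; apply: lt_vsum => n; rewrite mem_index_iota => /andP [hn1 hn2].
    have hM : (p ^ (2 * k - 2 * n) < N)%N by rewrite ltn_exp2l ?pgt1 //; lia.
    rewrite !vM vsign add0e vpn (veqX _ _ _ hr0) -EFinD lte_fin.
    have hM' := natlt _ _ hM.
    have {}hM' : ((p ^ (2 * k - 2 * n))%:R : R) < N%:R := hM'.
    have hn0 : (0:R) <= n%:R by rewrite ler0n.
    have {}rn : r < 0 := rn. nra.
  rewrite big_seq; apply: lt_vsum => n; rewrite mem_index_iota => /andP [hn1 hn2].
  have hM : (p ^ (2 * k + 1 - 2 * n) < N)%N by rewrite ltn_exp2l ?pgt1 //; lia.
  apply: (@lt_le_trans _ _ ((n%:R + 0) + (p ^ (2 * k + 1 - 2 * n))%:R * r)%:E).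
    rewrite lte_fin addr0.
    have hM' := natlt _ _ hM.
    have {}hM' : ((p ^ (2 * k + 1 - 2 * n))%:R : R) < N%:R := hM'.
    have hn0 : (0:R) <= n%:R by rewrite ler0n.
    have {}rn : r < 0 := rn. nra.
  apply: le_vM; last by rewrite (veqX _ _ _ hr0).
  by apply: le_vM; [rewrite v_cc | exact: ltW v_bb].
by rewrite h v0.
Qed.

Lemma up (a gam y' : K) :
  (forall d, root (gk p k beta pi) d -> (v (a - d) <= v (a - gam))%E) ->
  (v (a - gam) <= v y')%E ->
  (v ((gk p k beta pi).[a]) <= v ((gk p k beta pi).[gam + y']))%E.
Proof.
move=> hmax hy'.
have [rs hrs] := closed_field_poly_normal (gk p k beta pi).
have hroots : forall z, z \in rs -> root (gk p k beta pi) z.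
  move=> z hz; rewrite /root hrs hornerZ.
  by move: (root_prod_XsubC rs z); rewrite hz /root => /eqP ->; rewrite mulr0.
rewrite hrs !hornerZ !horner_prod !vM; apply: leeD => //; clear hrs.
elim: rs hroots => [|z rs ih] hroots; first by rewrite !big_nil.
rewrite !big_cons !vM; apply: leeD; last first.
  by apply: ih => z' hz'; apply: hroots; rewrite in_cons hz' orbT.
rewrite !hornerXsubC.
have hz : (v (a - z) <= v (a - gam))%E by apply: hmax; apply: hroots; rewrite in_cons eqxx.
have -> : gam + y' - z = (a - z) + (y' - (a - gam)) by ring.
apply: le_vD => //; apply: le_vD; first exact: le_trans hy'.
by rewrite vN.
Qed.

Variables (g y : K) (t : R).
Hypothesis hg : (0 <= v g)%E.
Hypothesis hy : v y = t%:E.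
Hypothesis ht : 0 < t.

Lemma Tlow a i : (i < p ^ a)%N ->
  (((logn p 'C(p ^ a, i.+1))%:R + (i.+1)%:R * t)%:E <= v (T g y a i))%E.
Proof.
move=> hi; rewrite /T -(mulr_natr (_ * _)) addrC.
apply: le_vM; last by rewrite vnat // bin_gt0.
apply: le_vM0; first exact: le_vX0.
by rewrite (veqX _ _ _ hy).
Qed.

Definition L (w : nat) (t : R) : R := (k - w)%:R + (p ^ (2 * w))%:R * t.

Lemma rineq (A B P J : nat) : (A <= B)%N -> (P <= J)%N ->
  A%:R + P%:R * t <= B%:R + J%:R * t.
Proof.
move=> /natle h1 /natle h2.
have {h1}h1 : (A%:R:R) <= B%:R := h1.
have {h2}h2 : (P%:R:R) <= J%:R := h2.
have ht2 : (0:R) < t := ht. nra.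
Qed.

Lemma rineq_lt (A B P J : nat) : (A <= B)%N -> (P <= J)%N -> ((A < B) || (P < J))%N ->
  A%:R + P%:R * t < B%:R + J%:R * t.
Proof.
move=> /natle h1 /natle h2 h.
have {h1}h1 : (A%:R:R) <= B%:R := h1.
have {h2}h2 : (P%:R:R) <= J%:R := h2.
have ht2 : (0:R) < t := ht.
case/orP: h => /natlt h.
  have {h}h : (A%:R:R) < B%:R := h. nra.
have {h}h : (P%:R:R) < J%:R := h. nra.
Qed.

Lemma ev_low n i : (n <= k)%N -> (i < p ^ (2 * k - 2 * n))%N ->
  exists w, [/\ (w <= k)%N, ((L w t)%:E <= v (cc n * T g y (2 * k - 2 * n) i))%E &
     (i.+1 != p ^ (2 * k - 2 * n))%N -> ((L w t)%:E < v (cc n * T g y (2 * k - 2 * n) i))%E].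
Proof.
move=> hn hi; have [f1 f2 f3] := Tfacts _ _ hi.
set s := logn p i.+1 in f1 f2 f3; set lC := logn p _ in f3.
have hb : (((n + lC)%:R + (i.+1)%:R * t)%:E <= v (cc n * T g y (2 * k - 2 * n) i))%E.
  by rewrite natrD -addrA EFinD vM v_cc; apply: leeD => //; exact: Tlow.
exists s./2; split; first by lia.
  apply: le_trans hb; rewrite lee_fin /L; apply: rineq; first by lia.
  by apply: leq_trans f1; rewrite leq_exp2l ?pgt1 //; lia.
move=> hne; apply: lt_le_trans hb; rewrite lte_fin /L; apply: rineq_lt; first by lia.
  by apply: leq_trans f1; rewrite leq_exp2l ?pgt1 //; lia.
have [hlt|heq] := ltnP (p ^ (2 * s./2)) i.+1; first by apply/orP; right.
have hj : (i.+1 = p ^ (2 * s./2))%N by apply/eqP; rewrite eqn_leq heq /=;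
  apply: leq_trans f1; rewrite leq_exp2l ?pgt1 //; lia.
have hs : s = (2 * s./2)%N by rewrite {1}/s hj pfactorK.
have ha : (2 * s./2 != 2 * k - 2 * n)%N by apply: contra hne => /eqP <-; rewrite hj.
apply/orP; left; lia.
Qed.

Lemma od_low n i : (1 <= n <= k)%N -> (i < p ^ (2 * k + 1 - 2 * n))%N ->
  exists w, (w <= k)%N /\ ((L w t)%:E < v (cc n * bb * T g y (2 * k + 1 - 2 * n) i))%E.
Proof.
move=> hn hi; have [f1 f2 f3] := Tfacts _ _ hi.
set s := logn p i.+1 in f1 f2 f3; set lC := logn p _ in f3.
have hb : (((n + lC)%:R + (i.+1)%:R * t)%:E < v (cc n * bb * T g y (2 * k + 1 - 2 * n) i))%E.
  rewrite natrD -addrA; apply: lt_vM; last exact: Tlow.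
  rewrite vM v_cc -[X in (X < _)%E]adde0; apply: lee_ltD => //; exact: v_bb.
exists s./2; split; first by lia.
apply: le_lt_trans hb; rewrite lee_fin /L; apply: rineq; first by lia.
by apply: leq_trans f1; rewrite leq_exp2l ?pgt1 //; lia.
Qed.


Lemma ev_vertex n i : (n <= k)%N -> (i.+1 = p ^ (2 * k - 2 * n))%N ->
  v (cc n * T g y (2 * k - 2 * n) i) = (L (k - n) t)%:E.
Proof.
move=> hn hi; rewrite /T -hi subnn expr0 mul1r binn mulr1n hi.
rewrite (veqM _ _ _ _ (v_cc n) (veqX _ _ _ hy)) /L subKn // mulnBr.
done.
Qed.

Section Exact.
Variable u : nat.
Hypothesis Hu : forall w, (w <= k)%N -> w != u -> L u t < L w t.

Lemma Hule w : (w <= k)%N -> L u t <= L w t.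
Proof. by move=> hw; case: (eqVneq w u) => [->//|hne]; apply: ltW; apply: Hu. Qed.

Lemma ev_gt n i : (n <= k)%N -> (i < p ^ (2 * k - 2 * n))%N ->
  ~~ ((n == k - u) && (i.+1 == p ^ (2 * k - 2 * n)))%N ->
  ((L u t)%:E < v (cc n * T g y (2 * k - 2 * n) i))%E.
Proof.
move=> hn hi hne.
have [w [hw h1 h2]] := ev_low _ _ hn hi.
case: (eqVneq i.+1 (p ^ (2 * k - 2 * n))%N) => hv1.
  rewrite (ev_vertex _ _ hn hv1) lte_fin; apply: Hu; first exact: leq_subr.
  apply: contra hne => /eqP h; rewrite hv1 eqxx andbT; apply/eqP.
  by rewrite -h subKn.
by apply: le_lt_trans (h2 hv1); rewrite lee_fin; apply: Hule.
Qed.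

Lemma exact_val : (gk p k beta pi).[g] = 0 -> (u <= k)%N ->
  v ((gk p k beta pi).[g + y]) = (L u t)%:E.
Proof.
move=> hroot hu; rewrite taylor //.
apply: veq_add.
  apply: (veq_sum _ _ _ (k - u)%N); first exact: iota_uniq.
  - by rewrite mem_index_iota /=; lia.
  - have hN : ((p ^ (2 * k - 2 * (k - u))).-1 < p ^ (2 * k - 2 * (k - u)))%N.
      by rewrite prednK // expn_gt0 prime_gt0.
    rewrite mulr_sumr; apply: (veq_sum _ _ _ (Ordinal hN)).
    + exact: index_enum_uniq.
    + exact: mem_index_enum.
    + rewrite ev_vertex /= ?leq_subr ?prednK ?expn_gt0 ?prime_gt0 //.
      by rewrite subKn.
    + move=> i _ hi; apply: ev_gt => //; first exact: leq_subr.
      rewrite eqxx /=; apply: contra hi => /eqP h; apply/eqP; apply: val_inj => /=.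
      by move: h; clear; lia.
  - move=> n; rewrite mem_index_iota => /andP [_ hn] hne.
    rewrite mulr_sumr; apply: lt_vsum => i _; apply: ev_gt => //.
    by rewrite (negPf hne).
rewrite big_seq; apply: lt_vsum => n; rewrite mem_index_iota => /andP [hn1 hn2].
rewrite mulr_sumr; apply: lt_vsum => i _.
have [w [hw h]] := od_low n i (ltac:(by rewrite hn1)) (ltn_ord i).
by apply: le_lt_trans h; rewrite lee_fin; apply: Hule.
Qed.

End Exact.

Lemma low_le (M : R) : (gk p k beta pi).[g] = 0 ->
  (forall w, (w <= k)%N -> M <= L w t) -> (M%:E <= v ((gk p k beta pi).[g + y]))%E.
Proof.
move=> hroot hM; rewrite taylor //; apply: le_vD.
  rewrite big_seq; apply: le_vsum => n; rewrite mem_index_iota => /andP [_ hn].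
  rewrite mulr_sumr; apply: le_vsum => i _.
  have [w [hw h _]] := ev_low n i hn (ltn_ord i).
  by apply: le_trans h; rewrite lee_fin; apply: hM.
rewrite big_seq; apply: le_vsum => n; rewrite mem_index_iota => /andP [hn1 hn2].
rewrite mulr_sumr; apply: le_vsum => i _.
have [w [hw h]] := od_low n i (ltac:(by rewrite hn1)) (ltn_ord i).
by apply: ltW; apply: le_lt_trans h; rewrite lee_fin; apply: hM.
Qed.

Lemma low_lt (M : R) : (gk p k beta pi).[g] = 0 ->
  (forall w, (w <= k)%N -> M < L w t) -> (M%:E < v ((gk p k beta pi).[g + y]))%E.
Proof.
move=> hroot hM; rewrite taylor //; apply: lt_vD.
  rewrite big_seq; apply: lt_vsum => n; rewrite mem_index_iota => /andP [_ hn].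
  rewrite mulr_sumr; apply: lt_vsum => i _.
  have [w [hw h _]] := ev_low n i hn (ltn_ord i).
  by apply: lt_le_trans h; rewrite lte_fin; apply: hM.
rewrite big_seq; apply: lt_vsum => n; rewrite mem_index_iota => /andP [hn1 hn2].
rewrite mulr_sumr; apply: lt_vsum => i _.
have [w [hw h]] := od_low n i (ltac:(by rewrite hn1)) (ltn_ord i).
by apply: lt_trans h; rewrite lte_fin; apply: hM.
Qed.

End Val.
Lemma bern1 (R : realType) (Q : R) d : 1 <= Q -> 1 + d%:R * (Q - 1) <= Q ^+ d.
Proof.
move=> hQ; elim: d => [|d ih]; first by rewrite mul0r addr0 expr0.
rewrite exprS -natr1.
have h0 : 0 <= d%:R * (Q - 1) :> R by rewrite mulr_ge0 // ?ler0n // subr_ge0.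
nra.
Qed.

Lemma bern2 (R : realType) (Q : R) d : 1 <= Q -> Q ^+ d.+1 - 1 <= d.+1%:R * Q ^+ d * (Q - 1).
Proof.
move=> hQ; elim: d => [|d ih]; first by rewrite expr1 expr0 mulr1 mul1r.
have hB : 1 <= Q ^+ d.+1 by exact: exprn_ege1.
move: ih hB; rewrite !exprS -!natr1; set B := Q ^+ d => ih hB.
have h1 : 0 <= Q - 1 by rewrite subr_ge0.
have h2 : 0 <= (Q * B - 1) * (Q - 1) by rewrite mulr_ge0 // subr_ge0.
have h3 : 0 <= (Q - 1) * ((d%:R + 1) * B * (Q - 1) - (Q * B - 1)) by rewrite mulr_ge0 // subr_ge0.
nra.
Qed.

Lemma Lgt_up (R : realType) (Q X : R) d : 1 < Q -> 1 < (Q - 1) * X -> (0 < d)%N ->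
  d%:R < X * (Q ^+ d - 1).
Proof.
move=> hQ hX hd.
have hb := @bern1 R Q d (ltW hQ).
have hd' : (1:R) <= d%:R by rewrite (ler_nat R 1 d).
have hX0 : 0 < X.
  rewrite ltNge; apply/negP => hx.
  have : (Q - 1) * X <= 0 by rewrite mulr_ge0_le0 // subr_ge0 ltW.
  lra.
have h1 : 0 <= X * (Q ^+ d - 1 - d%:R * (Q - 1)).
  apply: mulr_ge0; first exact: ltW.
  by rewrite subr_ge0; lra.
have h2 : 0 < d%:R * ((Q - 1) * X - 1).
  by apply: mulr_gt0; [lra | rewrite subr_gt0].
nra.
Qed.

Lemma Lgt_down (R : realType) (Q Z : R) d : 1 < Q -> 0 < Z -> (Q - 1) * (Z * Q ^+ d) < 1 ->
  Z * (Q ^+ d.+1 - 1) < d.+1%:R.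
Proof.
move=> hQ hZ hY.
have hb := @bern2 R Q d (ltW hQ).
have h1 : 0 <= Z * (d.+1%:R * Q ^+ d * (Q - 1) - (Q ^+ d.+1 - 1)).
  by apply: mulr_ge0; [exact: ltW | rewrite subr_ge0].
have h2 : 0 < d.+1%:R * (1 - (Q - 1) * (Z * Q ^+ d)).
  by apply: mulr_gt0; [rewrite ltr0n | rewrite subr_gt0].
nra.
Qed.

Lemma Lge_down (R : realType) (Q Z : R) d : 1 < Q -> 0 < Z -> (Q - 1) * (Z * Q ^+ d) <= 1 ->
  Z * (Q ^+ d.+1 - 1) <= d.+1%:R.
Proof.
move=> hQ hZ hY.
have hb := @bern2 R Q d (ltW hQ).
have h1 : 0 <= Z * (d.+1%:R * Q ^+ d * (Q - 1) - (Q ^+ d.+1 - 1)).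
  by apply: mulr_ge0; [exact: ltW | rewrite subr_ge0].
have h2 : 0 <= d.+1%:R * (1 - (Q - 1) * (Z * Q ^+ d)).
  by apply: mulr_ge0; [rewrite ler0n | rewrite subr_ge0].
nra.
Qed.

Lemma Lgt3 (R : realType) (Q X : R) d : 1 < Q -> 1 < (Q - 1) * X -> d%:R + (Q - 1)^-1 < Q ^+ d * X.
Proof.
move=> hQ hX.
have hb := @bern1 R Q d (ltW hQ).
have hQ1 : 0 < Q - 1 by rewrite subr_gt0.
have hc : (Q - 1)^-1 * (Q - 1) = 1 by rewrite mulVf // gt_eqF.
have hc0 : 0 < (Q - 1)^-1 by rewrite invr_gt0.
have hX0 : 0 < X.
  rewrite ltNge; apply/negP => hx.
  have : (Q - 1) * X <= 0 by rewrite mulr_ge0_le0 // ltW.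
  lra.
have h1 : 0 <= X * (Q ^+ d - 1 - d%:R * (Q - 1)).
  apply: mulr_ge0; first exact: ltW.
  by rewrite subr_ge0; lra.
have h2 : 0 < (Q - 1)^-1 * ((Q - 1) * X - 1).
  by apply: mulr_gt0; [exact: hc0 | rewrite subr_gt0].
have h3 : 0 <= d%:R * ((Q - 1) * X - 1).
  by apply: mulr_ge0; [rewrite ler0n | rewrite subr_ge0; exact: ltW].
nra.
Qed.

Definition Lr (R : realType) (k w : nat) (Q t : R) : R := (k - w)%:R + Q ^+ w * t.
Arguments Lr {R}.

Lemma Qpos (R : realType) (Q : R) w : 1 < Q -> 0 < Q ^+ w.
Proof. by move=> hQ; rewrite exprn_gt0 // (lt_trans ltr01). Qed.

Lemma Hu_lemma (R : realType) (k u : nat) (Q t : R) : 1 < Q -> (u <= k)%N -> 0 < t ->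
  1 < (Q - 1) * (Q ^+ u * t) -> (u = 0%N \/ (Q - 1) * (Q ^+ u.-1 * t) < 1) ->
  forall w, (w <= k)%N -> w != u -> Lr k u Q t < Lr k w Q t.
Proof.
move=> hQ hu ht hlo hhi w hw hne.
rewrite /Lr !natrB //.
case: (ltngtP w u) hne => // hwu _.
  have [d hd] : exists d, u = (w + d.+1)%N by exists (u - w).-1; lia.
  case: hhi => [hu0|hhi]; first by move: hwu; rewrite hu0.
  have hZ : 0 < Q ^+ w * t by rewrite mulr_gt0 // Qpos.
  move: hhi; rewrite hd addnS /= exprD => hhi.
  have hhi' : (Q - 1) * ((Q ^+ w * t) * Q ^+ d) < 1 by lra.
  have := @Lgt_down R Q (Q ^+ w * t) d hQ hZ hhi'.
  rewrite -?addnS ?natrD ?exprD => h.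
  have hQw := @Qpos R Q w hQ.
  nra.
have [d hd] : exists d, w = (u + d.+1)%N by exists (w - u).-1; lia.
have := @Lgt_up R Q (Q ^+ u * t) d.+1 hQ hlo (ltn0Sn d).
rewrite hd natrD exprD => h.
nra.
Qed.

Lemma Hle_lemma (R : realType) (k u : nat) (Q t : R) : 1 < Q -> (u <= k)%N -> 0 < t ->
  1 < (Q - 1) * (Q ^+ u * t) -> (u = 0%N \/ (Q - 1) * (Q ^+ u.-1 * t) <= 1) ->
  forall w, (w <= k)%N -> Lr k u Q t <= Lr k w Q t.
Proof.
move=> hQ hu ht hlo hhi w hw.
rewrite /Lr !natrB //.
case: (ltngtP w u) => hwu; last by rewrite hwu.
  have [d hd] : exists d, u = (w + d.+1)%N by exists (u - w).-1; lia.
  case: hhi => [hu0|hhi]; first by move: hwu; rewrite hu0.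
  have hZ : 0 < Q ^+ w * t by rewrite mulr_gt0 // Qpos.
  move: hhi; rewrite hd addnS /= exprD => hhi.
  have hhi' : (Q - 1) * ((Q ^+ w * t) * Q ^+ d) <= 1 by lra.
  have := @Lge_down R Q (Q ^+ w * t) d hQ hZ hhi'.
  rewrite -?addnS ?natrD ?exprD => h.
  have hQw := @Qpos R Q w hQ.
  nra.
have [d hd] : exists d, w = (u + d.+1)%N by exists (w - u).-1; lia.
have := @Lgt_up R Q (Q ^+ u * t) d.+1 hQ hlo (ltn0Sn d).
rewrite hd natrD exprD => h.
nra.
Qed.

Lemma big_lemma (R : realType) (k m : nat) (Q t : R) : 2 < Q -> (1 <= m <= k)%N -> 0 < t ->
  1 < (Q - 1) * (Q ^+ m.-1 * t) ->
  forall w, (w <= k)%N -> (k - m + 1)%:R + (Q - 1)^-1 < Lr k w Q t.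
Proof.
move=> hQ2 hm ht hlo w hw.
have hQ : 1 < Q by lra.
rewrite /Lr natrD !natrB //; last by case/andP: hm.
have hm1 : (m.-1%:R : R) = m%:R - 1 by rewrite -subn1 natrB //; case/andP: hm.
case: (leqP m.-1 w) => hwm.
  have [d hd] : exists d, w = (m.-1 + d)%N by exists (w - m.-1)%N; lia.
  have := @Lgt3 R Q (Q ^+ m.-1 * t) d hQ hlo.
  rewrite hd natrD exprD hm1 => h.
  nra.
have hc : (Q - 1)^-1 < 1 by rewrite invf_lt1 //; lra.
have hw2 : (w%:R : R) + 2 <= m%:R.
  have h : (w + 2 <= m)%N by lia.
  have := etrans (ler_nat R _ _) h; rewrite natrD => h2.
  have {}h2 : (w%:R : R) + 2%:R <= m%:R := h2.
  lra.
have hQw : 0 < Q ^+ w * t by rewrite mulr_gt0 // Qpos.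
lra.
Qed.

Lemma F5_lemma (R : realType) (k m : nat) (Q t : R) : (1 <= m <= k)%N ->
  (Q - 1) * (Q ^+ m.-1 * t) = 1 -> Lr k m.-1 Q t = Lr k m Q t.
Proof.
move=> hm h.
have hmk : (m <= k)%N by case/andP: hm.
have hmk' : (m.-1 <= k)%N by lia.
have hm1 : (m.-1%:R : R) = m%:R - 1 by rewrite -subn1 natrB //; case/andP: hm.
have hQ : Q ^+ m = Q * Q ^+ m.-1 by rewrite -exprS prednK //; case/andP: hm.
rewrite /Lr !natrB // hm1 hQ; lra.
Qed.

Lemma eventually_small (R : realType) (eps : R) : 0 < eps ->
  exists N0 : nat, forall N : nat, (N0 <= N)%N -> (N%:R : R)^-1 < eps.
Proof.
move=> he.
have he' : 0 <= eps^-1 by rewrite invr_ge0 ltW.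
have hb := @archi_boundP R (eps^-1) he'.
exists (Num.Def.archi_bound (eps^-1)).+1 => N hN.
have hN' : ((Num.Def.archi_bound (eps^-1)).+1%:R : R) <= N%:R := etrans (ler_nat R _ _) hN.
have hNpos : (0 : R) < N%:R.
  apply: lt_le_trans hN'; exact: ltr0Sn.
have h1 : eps^-1 < N%:R.
  apply: lt_le_trans hN'; apply: lt_le_trans hb _; rewrite -natr1; lra.
rewrite -[N%:R^-1]mul1r (ltr_pdivrMr _ _ hNpos).
have hi : eps * eps^-1 = 1 by rewrite mulfV // gt_eqF.
nra.
Qed.

Lemma lim_le (R : realType) (G : \bar R) (A B : R) (N0 : nat) : 0 <= B ->
  (forall N : nat, (N0 <= N)%N -> (0 < N)%N -> (G <= (A + B / N%:R)%:E)%E) ->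
  (G <= A%:E)%E.
Proof.
move=> hB h.
case: G h => [g| |] h; last by rewrite leNye.
  rewrite lee_fin leNgt; apply/negP => hg.
  have hD : 0 < g - A by rewrite subr_gt0.
  have [N1 hN1] : exists N1 : nat, forall N : nat, (N1 <= N)%N -> (N%:R : R)^-1 < (g - A) / (B + 1).
    apply: eventually_small; apply: divr_gt0 => //; lra.
  have := h (N0 + N1).+1 (leq_trans (leq_addr N1 N0) (leqnSn _)) (ltn0Sn _).
  have := hN1 (N0 + N1).+1 (leq_trans (leq_addl N0 N1) (leqnSn _)).
  set N := (N0 + N1).+1; rewrite lee_fin => h1 h2.
  have hNp : (0 : R) < N%:R by rewrite ltr0Sn.
  have hB1 : 0 < B + 1 by lra.
  have h3 : B / N%:R <= (B + 1) * N%:R^-1.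
    by rewrite ler_wpM2r ?invr_ge0 ?ltW //; lra.
  have h4 : (B + 1) * N%:R^-1 < g - A.
    by rewrite mulrC -ltr_pdivlMr.
  lra.
have := h N0.+1 (leqnSn _) (ltn0Sn _).
by [].
Qed.

Arguments exact_val {R K v p} hv hp {k beta pi e} hpi he0 hbeta {g y t} hg hy ht {u} Hu _ _.
Arguments low_le {R K v p} hv hp {k beta pi e} hpi he0 hbeta {g y t} hg hy ht M _ _.
Arguments low_lt {R K v p} hv hp {k beta pi e} hpi he0 hbeta {g y t} hg hy ht M _ _.
Arguments up {R K v p} hv {k beta pi a gam y'} _ _.
Arguments root_ge0 {R K v p} hv hp {k beta pi e} hpi he0 hbeta {g} _.
Arguments exists_val {R K v p} hv N _.
Arguments v_inf {R K v p} hv x.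
Arguments vM {R K v p} hv x y.
Arguments veqM {R K v p} hv x y r s _ _.
Arguments v0 {R K v p} hv.

Lemma cL (R : realType) (p k w : nat) (t : R) : L R p k w t = Lr k w ((p ^ 2)%:R) t.
Proof. by rewrite /L /Lr expnM natrX. Qed.

Lemma UB (R : realType) (K : closedFieldType) (v : K -> \bar R) (p : nat)
  (hv : is_Cp_valuation p v) (hp : prime p) (k : nat) (beta pi : K) (e : nat)
  (hpi : pi ^+ e = - (p%:R)) (he0 : (0 < e)%N) (hbeta : (0 <= v beta)%E)
  (a gam : K) (hroot : (gk p k beta pi).[gam] = 0)
  (hmax : forall d : K, root (gk p k beta pi) d -> (v (a - d) <= v (a - gam))%O)
  (u : nat) (hu : (u <= k)%N) (t0 : R) (y0 : K) (hy0 : v y0 = t0%:E) (ht0 : 0 < t0)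
  (hle : (v (a - gam) <= t0%:E)%O)
  (h1 : 1 <= ((p ^ 2)%:R - 1) * (((p ^ 2)%:R : R) ^+ u * t0))
  (h2 : u = 0%N \/ ((p ^ 2)%:R - 1) * (((p ^ 2)%:R : R) ^+ u * t0) < (p ^ 2)%:R) :
  (v ((gk p k beta pi).[a]) <= (Lr k u ((p ^ 2)%:R) t0)%:E)%E.
Proof.
set Q : R := (p ^ 2)%:R in h1 h2 *.
have hQ : 1 < Q.
  have : (1 < p ^ 2)%N by rewrite -{1}(exp1n 2) ltn_exp2r // prime_gt1.
  move=> h; exact: (etrans (ltr_nat R 1 _) h).
have hg := root_ge0 hv hp hpi he0 hbeta hroot.
have hQu : 0 < Q ^+ u := @Qpos R Q u hQ.
have [N0 hN0] : exists N0 : nat, forall N : nat, (N0 <= N)%N ->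
    u = 0%N \/ (Q - 1) * (Q ^+ u * (t0 + N%:R^-1)) < Q.
  case: h2 => [hu0|hlt]; first by exists 0%N => N _; left.
  have hQ1 : 0 < (Q - 1) * Q ^+ u by rewrite mulr_gt0 // subr_gt0.
  have [N0 hN] := @eventually_small R ((Q - (Q - 1) * (Q ^+ u * t0)) / ((Q - 1) * Q ^+ u))
     (ltac:(by rewrite divr_gt0 // subr_gt0)).
  exists N0 => N hN'; right.
  have := hN N hN'; rewrite (ltr_pdivlMr _ _ hQ1) => h.
  have {}h : N%:R^-1 * ((Q - 1) * Q ^+ u) < Q - (Q - 1) * (Q ^+ u * t0) := h.
  nra.
apply: (@lim_le R _ _ (Q ^+ u) N0 (ltW hQu)) => N hN hNpos.
have [w hw] := exists_val hv N hNpos.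
have hNr : (0 : R) < N%:R^-1 by rewrite invr_gt0 ltr0n.
set t := t0 + N%:R^-1.
have ht : 0 < t by rewrite /t addr_gt0.
have hy' : v (y0 * w) = t%:E by rewrite (veqM hv _ _ _ _ hy0 hw).
have hle' : (v (a - gam) <= v (y0 * w))%O.
  by apply: le_trans hle _; rewrite hy' lee_fin /t lerDl ltW.
apply: le_trans (up hv hmax hle') _.
have Hu : forall w0, (w0 <= k)%N -> w0 != u -> L R p k u t < L R p k w0 t.
  move=> w0 hw0 hne; rewrite !cL; apply: Hu_lemma => //.
  - rewrite /t mulrDr mulrDr; have : 0 < (Q - 1) * (Q ^+ u * N%:R^-1).
      by rewrite mulr_gt0 ?subr_gt0 // mulr_gt0.
    lra.
  - case: (hN0 N hN) => [->|hlt]; first by left.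
    case: (posnP u) => [u0|upos]; first by left.
    right; have hQs : Q ^+ u = Q * Q ^+ u.-1 by rewrite -exprS prednK.
    move: hlt; rewrite hQs /t => hlt.
    have hQ0 : 0 < Q by lra.
    have hlt' : Q * ((Q - 1) * (Q ^+ u.-1 * (t0 + N%:R^-1))) < Q * 1 by lra.
    by rewrite ltr_pM2l in hlt'.
rewrite (exact_val hv hp hpi he0 hbeta hg hy' ht Hu hroot hu) lee_fin cL /Lr /t.
by rewrite mulrDr addrA.
Qed.

Lemma lo_lt (R : realType) (Q d : R) m : 1 < Q ->
  ((Q ^+ m * (Q - 1))^-1 < d) = (1 < (Q - 1) * (Q ^+ m * d)).
Proof.
move=> hQ; have hP : 0 < Q ^+ m * (Q - 1) by rewrite mulr_gt0 ?Qpos // subr_gt0.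
rewrite -[X in X < _]mul1r (ltr_pdivrMr _ _ hP).
by congr (_ < _); ring.
Qed.

Lemma lo_le (R : realType) (Q d : R) m : 1 < Q ->
  ((Q ^+ m * (Q - 1))^-1 <= d) = (1 <= (Q - 1) * (Q ^+ m * d)).
Proof.
move=> hQ; have hP : 0 < Q ^+ m * (Q - 1) by rewrite mulr_gt0 ?Qpos // subr_gt0.
rewrite -[X in X <= _]mul1r (ler_pdivrMr _ _ hP).
by congr (_ <= _); ring.
Qed.

Lemma lo_eq (R : realType) (Q : R) m : 1 < Q ->
  (Q - 1) * (Q ^+ m * (Q ^+ m * (Q - 1))^-1) = 1.
Proof.
move=> hQ; have hP : Q ^+ m * (Q - 1) != 0 by rewrite gt_eqF // mulr_gt0 ?Qpos // subr_gt0.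
have -> : (Q - 1) * (Q ^+ m * (Q ^+ m * (Q - 1))^-1) = (Q ^+ m * (Q - 1)) * (Q ^+ m * (Q - 1))^-1 by ring.
by rewrite mulfV.
Qed.

Theorem mainTheorem17 (R : realType) (K : closedFieldType) (v : K -> \bar R)
  (p : nat) (hv : is_Cp_valuation p v) (hp : prime p) (hp3 : (3 < p)%N)
  (e : nat) (he : e \in [:: 3; 4; 6]%N) (hdiv : (e %| p.+1)%N)
  (pi : K) (hpi : pi ^+ e = - (p%:R))
  (k : nat) (hk : (1 <= k)%N)
  (beta : K) (hbetaQ : in_Qp v beta) (hbeta : (0%E <= v beta)%O)
  (m : nat) (hm : (m <= k)%N) (a gamma : K)
  (hroot : root (gk p k beta pi) gamma)
  (hmax : forall d : K, root (gk p k beta pi) d -> (v (a - d) <= v (a - gamma))%O) :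
  (((k - m)%:R + ((p ^ 2 - 1)%:R)^-1 : R)%:E < v (gk p k beta pi).[a])%O ->
  (((((p ^ (2 * m)) * (p ^ 2 - 1))%:R)^-1 : R)%:E < v (a - gamma))%O /\
  ((v (gk p k beta pi).[a] <= ((k - m + 1)%:R + ((p ^ 2 - 1)%:R)^-1 : R)%:E)%O ->
   v (a - gamma) = ((v (gk p k beta pi).[a] - ((k - m)%:R : R)%:E)
                     * ((((p ^ (2 * m))%:R)^-1 : R))%:E)%E).
Proof.
move=> hG.
have he0 : (0 < e)%N by move: he; rewrite !inE => /or3P [] /eqP ->.
have hr : (gk p k beta pi).[gamma] = 0 by apply/eqP.
have hg := root_ge0 hv hp hpi he0 hbeta hr.
set Q : R := (p ^ 2)%:R.
have hQ2 : 2 < Q.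
  have : (2 < p ^ 2)%N by rewrite -mulnn; nia.
  move=> h; exact: (etrans (ltr_nat R 2 _) h).
have hQ : 1 < Q by lra.
have hc : ((p ^ 2 - 1)%:R : R) = Q - 1 by rewrite natrB // expn_gt0 prime_gt0.
have hQw : forall w, ((p ^ (2 * w))%:R : R) = Q ^+ w by move=> w; rewrite expnM natrX.
have hlo : forall w, ((((p ^ (2 * w)) * (p ^ 2 - 1))%:R : R)^-1) = (Q ^+ w * (Q - 1))^-1.
  by move=> w; rewrite natrM hc hQw.
rewrite hc in hG; rewrite hlo hc hQw.
set G := v (gk p k beta pi).[a] in hG *.
set delta := v (a - gamma).
have P1 : forall m', (m' <= k)%N -> (delta <= ((Q ^+ m' * (Q - 1))^-1)%:E)%O ->
    (G <= ((k - m')%:R + (Q - 1)^-1)%:E)%O.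
  move=> m' hm' hle.
  have hN1 : (0 < p ^ (2 * m') * (p ^ 2 - 1))%N.
    by rewrite muln_gt0 expn_gt0 prime_gt0 //= subn_gt0 -mulnn; nia.
  have [z hz] := exists_val hv _ hN1.
  rewrite hlo in hz.
  have ht0 : 0 < (Q ^+ m' * (Q - 1))^-1 by rewrite invr_gt0 mulr_gt0 ?Qpos // subr_gt0.
  have := @UB R K v p hv hp k beta pi e hpi he0 hbeta a gamma hr hmax m' hm' _ z hz ht0 hle.
  rewrite -/Q lo_eq // => /(_ (lexx _) (or_intror hQ)) h.
  apply: le_trans h _; rewrite lee_fin /Lr.
  have -> : Q ^+ m' * (Q ^+ m' * (Q - 1))^-1 = (Q - 1)^-1.
    have hq : Q ^+ m' != 0 by rewrite gt_eqF // Qpos.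
    by rewrite invfM mulrA mulfV // mul1r.
  done.
have part1 : (((Q ^+ m * (Q - 1))^-1)%:E < delta)%O.
  rewrite ltNge; apply/negP => hle.
  have := P1 m hm hle.
  by rewrite leNgt hG.
split => // hGle.
have ha : gamma + (a - gamma) = a by rewrite addrC subrK.
have [d hd] : exists d : R, delta = d%:E.
  move: part1 hGle; rewrite /delta; case E: (v (a - gamma)) => [d| |] // _ hGle.
    by exists d.
  move: E => /(v_inf hv) /eqP; rewrite subr_eq0 => /eqP hag.
  by move: hGle; rewrite /G hag hr (v0 hv).
have hy : v (a - gamma) = d%:E by [].
move: part1; rewrite hd lte_fin (@lo_lt R Q d m hQ) => hd1.
have dpos : 0 < d.
  have hQm : 0 < (Q - 1) * Q ^+ m by rewrite mulr_gt0 ?Qpos // subr_gt0.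
  rewrite ltNge; apply/negP => hd0.
  have : (Q - 1) * (Q ^+ m * d) <= 0.
    by rewrite mulrA mulr_ge0_le0 // ltW.
  lra.
have hd2 : m = 0%N \/ (0 < m)%N /\ (Q - 1) * (Q ^+ m.-1 * d) <= 1.
  case: (posnP m) => [m0|mpos]; first by left.
  right; split => //; rewrite leNgt; apply/negP => hbig.
  have hM : forall w, (w <= k)%N -> (k - m + 1)%:R + (Q - 1)^-1 < L R p k w d.
    move=> w hw; rewrite cL; apply: big_lemma => //; by rewrite mpos.
  have := low_lt hv hp hpi he0 hbeta hg hy dpos _ hr hM.
  by rewrite ha -/G ltNge hGle.
have hlow : ((Lr k m Q d)%:E <= G)%O.
  have hM : forall w, (w <= k)%N -> Lr k m Q d <= L R p k w d.
    move=> w hw; rewrite cL; apply: Hle_lemma => //.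
    by case: hd2 => [->|[_ h]]; [left | right].
  have := low_le hv hp hpi he0 hbeta hg hy dpos _ hr hM.
  by rewrite ha.
have hup : (G <= (Lr k m Q d)%:E)%O.
  case: hd2 => [m0|[mpos hle1]].
    apply: (@UB R K v p hv hp k beta pi e hpi he0 hbeta a gamma hr hmax m hm d (a - gamma) hy dpos).
    - by rewrite hy.
    - exact: ltW.
    - by left.
  case: (ltrgtP ((Q - 1) * (Q ^+ m.-1 * d)) 1) hle1 => // hcmp _.
    apply: (@UB R K v p hv hp k beta pi e hpi he0 hbeta a gamma hr hmax m hm d (a - gamma) hy dpos).
    - by rewrite hy.
    - exact: ltW.
    - right; have hQs : Q ^+ m = Q * Q ^+ m.-1 by rewrite -exprS prednK.
      rewrite hQs.
      have hQ0 : 0 < Q by lra.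
      have : Q * ((Q - 1) * (Q ^+ m.-1 * d)) < Q * 1 by rewrite ltr_pM2l.
      rewrite mulr1 => h; apply: le_lt_trans h; rewrite le_eqVlt; apply/orP; left; apply/eqP; ring.
  rewrite -(@F5_lemma R k m Q d) ?mpos ?hm //.
  apply: (@UB R K v p hv hp k beta pi e hpi he0 hbeta a gamma hr hmax m.-1 _ d (a - gamma) hy dpos).
  - exact: (leq_trans (leq_pred m)).
  - by rewrite hy.
  - by rewrite hcmp.
  - by right; rewrite hcmp.
have hGe : G = (Lr k m Q d)%:E by apply/eqP; rewrite eq_le hup hlow.
rewrite hGe /Lr -EFinB -EFinM; congr (_%:E).
have hq : Q ^+ m != 0 by rewrite gt_eqF // Qpos.
have -> : (k - m)%:R + Q ^+ m * d - (k - m)%:R = Q ^+ m * d by ring.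
by rewrite mulrC mulKf.
Qed.
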